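(* Let $k$ be an algebraically closed field of characteristic zero and $0<l<n$. Let $Y,Z\subset\mathbb P^n$ be closed subvarieties with saturated homogeneous ideals $I_Y,I_Z\subset k[x_0,\dots,x_n]$, and let $X$ be defined by $I_X=I_Y\cap I_Z$. Suppose $Y\subset\{x_0=\cdots=x_{l-1}=0\}$ and $Z\subset\{x_{l+1}=\cdots=x_n=0\}$, and that $Y\cap Z\neq\emptyset$, so that $Y\cap Z=\{p\}$ where $p$ is the point whose only nonzero coordinate is $x_l$. Then for every monomial order $\prec$ on $k[x_0,\dots,x_n]$, \[ \mathrm{in}_\prec(I_X)=\langle\mathrm{in}_\prec(I_Y\cap k[x_l,\dots,x_n])\rangle+\langle\mathrm{in}_\prec(I_Z\cap k[x_0,\dots,x_l])\rangle+T, \] where $T=\langle x_0,\dots,x_{l-1}\rangle\langle x_{l+1},\dots,x_n\rangle$, $\mathrm{in}_\prec(I_Y\cap k[x_l,\dots,x_n])$ is computed in $k[x_l,\dots,x_n]$ (with the restricted order) and $\langle\cdot\rangle$ denotes the ideal it generates in $k[x_0,\dots,x_n]$; similarly for $Z$. *)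

(* Defs.v *)
From HB Require Import structures.
From mathcomp Require Import all_boot all_order all_algebra.
From mathcomp Require Import mpoly.
Set Implicit Arguments. Unset Strict Implicit. Unset Printing Implicit Defensive.
Import GRing.Theory.
Local Open Scope ring_scope.

Section Defs.
Variables (k : fieldType) (N : nat).

Definition monomial_order (lt : rel 'X_{1..N}) : Prop :=
  [/\ irreflexive lt, transitive lt,
      (forall m1 m2, m1 != m2 -> lt m1 m2 || lt m2 m1),
      (forall m1 m2 m3, lt m1 m2 -> lt (m1 + m3)%MM (m2 + m3)%MM)
    & well_founded (fun a b => lt a b)].

Definition is_lead_mono (lt : rel 'X_{1..N}) (f : {mpoly k[N]}) (m : 'X_{1..N}) :=
  m \in msupp f /\ forall m', m' \in msupp f -> m' != m -> lt m' m.

Definition is_ideal (J : {mpoly k[N]} -> Prop) : Prop :=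
  [/\ J 0, (forall f g, J f -> J g -> J (f + g)) & (forall f g, J g -> J (f * g))].

Definition ideal_gen (S : {mpoly k[N]} -> Prop) (f : {mpoly k[N]}) : Prop :=
  forall J, is_ideal J -> (forall g, S g -> J g) -> J f.

Definition ideal_add (I J : {mpoly k[N]} -> Prop) (f : {mpoly k[N]}) : Prop :=
  exists g h, [/\ I g, J h & f = g + h].

Definition ideal_mul (I J : {mpoly k[N]} -> Prop) : {mpoly k[N]} -> Prop :=
  ideal_gen (fun f => exists g h, [/\ I g, J h & f = g * h]).

Definition initial_ideal (lt : rel 'X_{1..N}) (I : {mpoly k[N]} -> Prop) :=
  ideal_gen (fun f => exists g m, [/\ I g, is_lead_mono lt g m & f = 'X_[m]]).

Definition homogeneous (p : {mpoly k[N]}) : Prop :=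
  exists d, forall m, m \in msupp p -> mdeg m = d.

(* A closed subset of P^{N-1}, represented by its affine cone minus the origin:
   the nonzero common zeros of a set S of homogeneous polynomials. *)
Definition proj_closed (Y : ('I_N -> k) -> Prop) : Prop :=
  exists S : {mpoly k[N]} -> Prop,
    (forall s, S s -> homogeneous s) /\
    forall v, Y v <-> ((exists i, v i != 0) /\ forall s, S s -> s.@[v] = 0).

(* saturated homogeneous ideal of Y: the polynomials vanishing on Y
   (i.e. on its affine cone) *)
Definition vanishing_ideal (Y : ('I_N -> k) -> Prop) (f : {mpoly k[N]}) : Prop :=
  forall v, Y v -> f.@[v] = 0.

Definition in_vars (P : pred nat) (f : {mpoly k[N]}) : Prop :=
  forall m i, m \in msupp f -> (m i > 0)%N -> P (nat_of_ord i).

End Defs.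

(* Main.v *)
Require Import Defs.
From HB Require Import structures.
From mathcomp Require Import all_boot all_order all_algebra.
From mathcomp Require Import mpoly.
Local Open Scope ring_scope.

Module Helpers.
Set Implicit Arguments. Unset Strict Implicit. Unset Printing Implicit Defensive.
Import GRing.Theory.
Section Ideals.
Variables (k : fieldType) (N : nat).
Implicit Types (S I J : {mpoly k[N]} -> Prop).

Lemma gen_ideal S : is_ideal (ideal_gen S).
Proof.
split.
- by move=> J [] ? ? ? _.
- by move=> f g Hf Hg J HJ HS; case: (HJ) => _ HD _; apply: HD; [apply: Hf|apply: Hg].
- by move=> f g Hg J HJ HS; case: (HJ) => _ _ HM; apply: HM; apply: Hg.
Qed.

Lemma gen_sub S f : S f -> ideal_gen S f.
Proof. by move=> Sf J _ HS; apply: HS. Qed.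

Lemma add_ideal I J : is_ideal I -> is_ideal J -> is_ideal (ideal_add I J).
Proof.
move=> [I0 ID IM] [J0 JD JM]; split.
- by exists 0, 0; split => //; rewrite addr0.
- move=> f g [a [b [Ia Jb ->]]] [c [d [Ic Jd ->]]].
  exists (a + c), (b + d); split; [exact: ID|exact: JD|].
  by rewrite addrACA.
- move=> f g [a [b [Ia Jb ->]]]; exists (f * a), (f * b); split;
  [exact: IM|exact: JM|]. by rewrite mulrDr.
Qed.

Lemma add_l I J f : is_ideal J -> I f -> ideal_add I J f.
Proof. by move=> [J0 _ _] If; exists f, 0; split => //; rewrite addr0. Qed.

Lemma add_r I J f : is_ideal I -> J f -> ideal_add I J f.
Proof. by move=> [I0 _ _] Jf; exists 0, f; split => //; rewrite add0r. Qed.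

End Ideals.
Section Poly.
Variables (k : fieldType) (N : nat).

Lemma hom_scale (s : {mpoly k[N]}) d c (v : 'I_N -> k) :
  (forall m, m \in msupp s -> mdeg m = d) ->
  s.@[fun i => c * v i] = c ^+ d * s.@[v].
Proof.
move=> H; rewrite !mevalE mulr_sumr; apply: eq_big_seq => m Hm.
rewrite -(H m Hm) mdegE -prodrXr.
under eq_bigr do rewrite exprMn.
by rewrite big_split /= mulrCA.
Qed.

Lemma cone_scale (W : ('I_N -> k) -> Prop) w c :
  proj_closed W -> W w -> c != 0 -> W (fun i => c * w i).
Proof.
move=> [S [HS HW]] /HW [[i Hi] Hz] c0; apply/HW; split.
  by exists i; rewrite mulf_neq0.
move=> s Ss; have [d Hd] := HS s Ss.
by rewrite (hom_scale _ _ Hd) Hz // mulr0.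
Qed.

Lemma prod_zero (v : 'I_N -> k) (m : 'X_{1..N}) i :
  v i = 0 -> (0 < m i)%N -> \prod_j v j ^+ m j = 0.
Proof.
move=> vi mi; rewrite (bigD1 i) //= vi -(prednK mi) exprS !mul0r.
by [].
Qed.

Lemma in_vars_eval (R : pred nat) l (g : {mpoly k[N]}) (v : 'I_N -> k) :
  in_vars R g -> (forall i : 'I_N, R i -> i != l :> nat -> v i = 0) ->
  g.@[v] = g.@[fun i => if nat_of_ord i == l then v i else 0].
Proof.
move=> Hg Hv; rewrite !mevalE; apply: eq_big_seq => m Hm; congr (_ * _).
apply: eq_bigr => i _; case: eqP => // /eqP il.
case: (posnP (m i)) => [->|mi]; first by rewrite !expr0.
by rewrite Hv // (Hg m i Hm mi).
Qed.

End Poly.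
Section Cone.
Variables (k : fieldType) (N : nat).

Lemma natr_inj0 : [pchar k] =i pred0 -> injective (fun i : nat => i%:R : k).
Proof.
move=> /pcharf0P H i j /= /eqP; wlog le : i j / (i <= j)%N.
  by move=> W E; case/orP: (leq_total i j) => h; [|apply/esym]; apply: W; rewrite // eq_sym.
by rewrite eq_sym -subr_eq0 -natrB // H subn_eq0 => ji; apply/eqP; rewrite eqn_leq ji le.
Qed.

Lemma cone_vanish (W : ('I_N -> k) -> Prop) w l (g : {mpoly k[N]}) :
  [pchar k] =i pred0 -> proj_closed W -> W w ->
  (forall i : 'I_N, i != l :> nat -> w i = 0) -> vanishing_ideal W g ->
  forall v : 'I_N -> k, (forall i : 'I_N, i != l :> nat -> v i = 0) -> g.@[v] = 0.
Proof.
move=> ch Wc Ww w0 Hg v v0.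
have [i0 wi0] : exists i0, w i0 != 0.
  by case: Wc => S [_ HW]; case: (HW w) => /(_ Ww) [].
have i0l : i0 = l :> nat by apply/eqP; apply: contraNT wi0 => /w0 ->.
pose e (t : k) (i : 'I_N) := if nat_of_ord i == l then t else 0.
have He : forall t, t != 0 -> g.@[e t] = 0.
  move=> t t0; have -> : g.@[e t] = g.@[fun i => (t / w i0) * w i].
    apply: meval_eq => i; rewrite /e; case: eqP => il.
      have -> : i = i0 by apply: val_inj; rewrite /= il i0l.
      by rewrite divfK.
    by rewrite (w0 i) ?mulr0 //; apply/eqP.
  by apply: Hg; apply: cone_scale => //; rewrite mulf_neq0 ?invr_eq0.
pose G : {poly k} := \sum_(m <- msupp g) g@_m *:
   \prod_(i < N) (if nat_of_ord i == l then 'X else 0) ^+ m i.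
have HG : forall t, G.[t] = g.@[e t].
  move=> t; rewrite horner_sum mevalE; apply: eq_bigr => m _.
  rewrite hornerZ horner_prod; congr (_ * _); apply: eq_bigr => i _.
  by rewrite horner_exp /e; case: ifP; rewrite ?hornerX ?horner0.
have G0 : G = 0.
  apply: (@roots_geq_poly_eq0 _ _ [seq i.+1%:R | i <- iota 0 (size G)]).
  - apply/allP => x /mapP [i _ ->]; rewrite /root HG He //.
    by move/pcharf0P: ch => ->.
  - rewrite map_inj_uniq ?iota_uniq // => i j /natr_inj0 -/(_ ch). by case.
  - by rewrite size_map size_iota.
rewrite (@meval_eq _ _ v (e (v i0))); first by rewrite -HG G0 horner0.
  move=> i; rewrite /e; case: eqP => il.
    by have -> : i = i0 by apply: val_inj; rewrite /= il i0l.
  by apply: v0; apply/eqP.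
Qed.

End Cone.
Section Restr.
Variables (k : fieldType) (N : nat).

Lemma restrict lt (P : pred 'X_{1..N}) (W : ('I_N -> k) -> Prop) f m :
  vanishing_ideal W f -> is_lead_mono lt f m -> P m ->
  (forall m', m' \in msupp f -> ~~ P m' -> forall v, W v -> \prod_i v i ^+ m' i = 0) ->
  exists f1, [/\ vanishing_ideal W f1, is_lead_mono lt f1 m &
                 forall m', m' \in msupp f1 -> P m'].
Proof.
move=> Hf [Hm Hlt] Pm HnP.
pose f1 := \sum_(m' <- msupp f | P m') f@_m' *: 'X_[m'].
have Hc : forall x, f1@_x = if P x then f@_x else 0.
  move=> x; rewrite /f1 raddf_sum /= big_mkcond /=.
  under eq_bigr do rewrite mcoeffZ mcoeffX.
  have [xin|xnin] := boolP (x \in msupp f).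
    rewrite (bigD1_seq x) ?msupp_uniq //= eqxx mulr1 big1 ?addr0.
      by case: (P x).
    by move=> y /negbTE yx; rewrite yx mulr0; case: (P y).
  rewrite big1_seq; last first.
    move=> y [] /andP [_ yin]; have -> : (y == x) = false.
      by apply: contraNF xnin => /eqP <-.
    by rewrite mulr0; case: (P y).
  move: xnin; rewrite mcoeff_msupp negbK => /eqP ->.
  by case: (P x).
have Hs : forall x, x \in msupp f1 -> P x && (x \in msupp f).
  by move=> x; rewrite !mcoeff_msupp Hc; case: (P x); rewrite ?eqxx.
exists f1; split.
- move=> v Wv; rewrite /f1 raddf_sum /=.
  have := Hf v Wv; rewrite mevalE (bigID P) /= [X in _ + X]big1_seq ?addr0.
    by move=> E; apply: etrans E; apply: eq_bigr => m' _; rewrite mevalZ mevalX.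
  by move=> m' /andP [nP m'in]; rewrite (HnP m') ?mulr0.
- split; first by rewrite mcoeff_msupp Hc Pm -mcoeff_msupp.
  by move=> m' /Hs /andP [_ H]; apply: Hlt.
- by move=> m' /Hs /andP [].
Qed.

End Restr.
End Helpers.
Import Helpers GRing.Theory.
Theorem lemma3p1 (k : closedFieldType) (n l : nat)
  (Y Z : ('I_n.+1 -> k) -> Prop) (lt : rel 'X_{1..n.+1}) :
  [pchar k] =i pred0 ->
  (0 < l < n)%N ->
  proj_closed Y -> proj_closed Z ->
  (forall v, Y v -> forall i : 'I_n.+1, (i < l)%N -> v i = 0) ->
  (forall v, Z v -> forall i : 'I_n.+1, (l < i)%N -> v i = 0) ->
  (exists v, Y v /\ Z v) ->
  monomial_order lt ->
  let IY := vanishing_ideal Y in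
  let IZ := vanishing_ideal Z in
  let IX := fun f => IY f /\ IZ f in
  let T := ideal_mul
             (ideal_gen (fun f => exists i : 'I_n.+1, (i < l)%N /\ f = 'X_i))
             (ideal_gen (fun f => exists i : 'I_n.+1, (l < i)%N /\ f = 'X_i)) in
  let inY := initial_ideal lt (fun f => IY f /\ in_vars (fun i => l <= i)%N f) in
  let inZ := initial_ideal lt (fun f => IZ f /\ in_vars (fun i => i <= l)%N f) in
  forall f, initial_ideal lt IX f <-> ideal_add (ideal_add inY inZ) T f.
Proof.
move=> ch hl pY pZ Y0 Z0 [w [Yw Zw]] _ IY IZ IX T inY inZ f.
have w0 : forall i : 'I_n.+1, i != l :> nat -> w i = 0.
  move=> i il; case: (ltngtP i l) il => // h _; [exact: Y0|exact: Z0].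
have YinZ : forall g, IY g -> in_vars (fun i => l <= i)%N g -> IZ g.
  move=> g Hg Hv v Zv.
  rewrite (in_vars_eval (l := l) Hv); last first.
    by move=> i li il; apply: Z0 => //; rewrite ltn_neqAle eq_sym il li.
  apply: (cone_vanish ch pY Yw w0 Hg) => i il; by rewrite (negbTE il).
have ZinY : forall g, IZ g -> in_vars (fun i => i <= l)%N g -> IY g.
  move=> g Hg Hv v Yv.
  rewrite (in_vars_eval (l := l) Hv); last first.
    by move=> i li il; apply: Y0 => //; rewrite ltn_neqAle il li.
  apply: (cone_vanish ch pZ Zw w0 Hg) => i il; by rewrite (negbTE il).
have idX : is_ideal (initial_ideal lt IX) by apply: gen_ideal.
have idY : is_ideal inY by apply: gen_ideal.
have idZ : is_ideal inZ by apply: gen_ideal.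
have idT : is_ideal T by apply: gen_ideal.
have idYZ := add_ideal idY idZ.
split.
- move=> H; apply: H; first exact: add_ideal.
  move=> g [f' [m [[Yf Zf] Hlead ->]]].
  have [hA|hA] := boolP [exists i : 'I_n.+1, (i < l)%N && (0 < m i)%N].
  have [hB|hB] := boolP [exists j : 'I_n.+1, (l < j)%N && (0 < m j)%N].
  + apply: add_r => //.
    case/existsP: hA => i /andP [il mi]; case/existsP: hB => j /andP [lj mj].
    have ij : i != j by apply: contraTneq il => ->; rewrite -leqNgt ltnW.
    have -> : 'X_[m] = 'X_[m - U_(i) - U_(j)] * ('X_i * 'X_j) :> {mpoly k[n.+1]}.
      rewrite -!mpolyXD; congr mpolyX; apply/mnmP => x.
      rewrite !mnmDE !mnmBE !mnm1E.
      case: (eqVneq i x) => [eix|ix]; case: (eqVneq j x) => [ejx|jx].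
      * by move: ij; rewrite eix ejx eqxx.
      * by subst x; rewrite /= subn0 addn0 subn1 addn1 prednK.
      * by subst x; rewrite /= subn0 add0n subn1 addn1 prednK.
      * by rewrite /= !subn0 !addn0.
    case: idT => _ _ HM; apply: HM.
    apply: gen_sub; exists 'X_i, 'X_j; split => //; apply: gen_sub.
      by exists i.
    by exists j.
  + apply: add_l => //; apply: add_r => //.
    pose P := fun m' : 'X_{1..n.+1} => [forall i : 'I_n.+1, (l < i)%N ==> (m' i == 0%N)].
    have [f1 [Hf1 Hl1 HP1]] : exists f1, [/\ vanishing_ideal Z f1, is_lead_mono lt f1 m &
                 forall m', m' \in msupp f1 -> P m'].
      apply: (@restrict _ _ lt P Z f' m) => //.
        rewrite /P; apply/forallP => i; apply/implyP => li; move: hB; rewrite negb_exists.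
        by move/forallP/(_ i); rewrite li /= lt0n negbK.
      move=> m' _; rewrite /P => /forallPn [i]; rewrite negb_imply => /andP [li mi] v Zv.
      by apply: (prod_zero (Z0 v Zv i li)); rewrite lt0n.
    apply: gen_sub; exists f1, m; split => //; split => // m' i /HP1; rewrite /P => /forallP /(_ i).
    by move=> /implyP H mi; rewrite leqNgt; apply/negP => /H /eqP; move: mi => /[swap] ->.
  + apply: add_l => //; apply: add_l => //.
    pose P := fun m' : 'X_{1..n.+1} => [forall i : 'I_n.+1, (i < l)%N ==> (m' i == 0%N)].
    have [f1 [Hf1 Hl1 HP1]] : exists f1, [/\ vanishing_ideal Y f1, is_lead_mono lt f1 m &
                 forall m', m' \in msupp f1 -> P m'].
      apply: (@restrict _ _ lt P Y f' m) => //.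
        rewrite /P; apply/forallP => i; apply/implyP => li; move: hA; rewrite negb_exists.
        by move/forallP/(_ i); rewrite li /= lt0n negbK.
      move=> m' _; rewrite /P => /forallPn [i]; rewrite negb_imply => /andP [li mi] v Yv.
      by apply: (prod_zero (Y0 v Yv i li)); rewrite lt0n.
    apply: gen_sub; exists f1, m; split => //; split => // m' i /HP1; rewrite /P => /forallP /(_ i).
    by move=> /implyP H mi; rewrite leqNgt; apply/negP => /H /eqP; move: mi => /[swap] ->.
- move: (idX) => [X0 XD XM].
  move=> [ab [c [[a [b [Ha Hb ->]]] Hc ->]]].
  apply: (XD); [apply: (XD)|].
  + apply: Ha => // g [g' [m [[Hg Hv] Hl ->]]].
    by apply: gen_sub; exists g', m; split => //; split => //; apply: YinZ.
  + apply: Hb => // g [g' [m [[Hg Hv] Hl ->]]].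
    by apply: gen_sub; exists g', m; split => //; split => //; apply: ZinY.
  + apply: Hc => // g [g1 [h [H1 H2 ->]]].
    pose J := fun g => forall h, ideal_gen (fun f => exists i : 'I_n.+1, (l < i)%N /\ f = 'X_i) h ->
        initial_ideal lt IX (g * h).
    suff : J g1 by apply.
    apply: H1.
      split.
      * by move=> h0 _; rewrite mul0r.
      * by move=> p q Hp Hq h0 Hh; rewrite mulrDl; apply: (XD); [apply: Hp|apply: Hq].
      * by move=> p q Hq h0 Hh; rewrite -mulrA; apply: (XM); apply: Hq.
    move=> _ [i [il ->]] h0 Hh; apply: (Hh (fun h => initial_ideal lt IX ('X_i * h))).
      split.
      * by rewrite mulr0.
      * by move=> p q Hp Hq; rewrite mulrDr; apply: (XD).
      * by move=> p q Hq; rewrite mulrCA; apply: (XM).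
    move=> _ [j [lj ->]].
    apply: gen_sub; exists ('X_i * 'X_j), (U_(i) + U_(j))%MM; split.
    * split => v Hv; rewrite mevalM !mevalXU.
        by rewrite (Y0 v Hv i il) mul0r.
      by rewrite (Z0 v Hv j lj) mulr0.
    * rewrite -mpolyXD; split; first by rewrite msuppX mem_seq1.
      by move=> m'; rewrite msuppX mem_seq1 => /eqP ->; rewrite eqxx.
    * by rewrite mpolyXD.
Qed.
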